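(* For any object $(E,\sigma)$ of $\mathrm{OS}_B$, every upward-closed subset (ideal) of the poset $E^\star$ is an ordered language on the alphabet $E$.
   Context: An object of $\mathrm{OS}_B$ is a pair $(E,\sigma)$ with $E$ a totally ordered finite set and $\sigma$ an order-reversing involution with a unique fixed point; $-e:=\sigma(e)$. $E^\star$ is the set of finite words in $E$ with the partial order: $e_1\cdots e_m\le f_1\cdots f_n$ iff there is a strictly increasing $\theta:[m]\to[n]$ with $e_i=f_{\theta(i)}$ for all $i$ and, for each $j\in[n]$, some $i$ with $\theta(i)\le j$ and $f_{\theta(i)}\in\{\pm f_j\}$. For a finite set $\Sigma$, a language is a subset of $\Sigma^\star$; the concatenation of two languages is the set of concatenations of a word of the first with a word of the second. The ordered languages on $\Sigma$ form the smallest collection of languages containing all singleton languages $\{w\}$ and all languages $\Pi^\star$ for $\Pi\subset\Sigma$, and closed under finite unions and concatenations. *)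

(* Defs.v *)
From mathcomp Require Import all_boot all_order.
Set Implicit Arguments. Unset Strict Implicit. Unset Printing Implicit Defensive.
Import Order.TTheory.
Local Open Scope order_scope.

Definition OSB_involution (d : Order.disp_t) (E : finOrderType d) (sigma : E -> E) : Prop :=
  [/\ involutive sigma,
      (forall x y : E, x <= y -> sigma y <= sigma x)
    & exists! e : E, sigma e = e].

Local Close Scope order_scope.

(* Positions are 0-based; onth gives None out of range. *)
Definition word_le (E : eqType) (sigma : E -> E) (u w : seq E) : Prop :=
  exists theta : nat -> nat,
    [/\ (forall i j, i < j -> j < size u -> theta i < theta j),
        (forall i, i < size u -> theta i < size w /\ onth u i = onth w (theta i))
      & (forall j, j < size w -> exists2 i, i < size u &
            theta i <= j /\ (onth w (theta i) = onth w j
                             \/ onth w (theta i) = omap sigma (onth w j)))].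

Definition language (S : Type) := seq S -> Prop.

Inductive ordered_lang (S : finType) : language S -> Prop :=
  | ol_single (w : seq S) : ordered_lang (fun x => x = w)
  | ol_star (Pi : {set S}) : ordered_lang (fun x => all (fun a => a \in Pi) x)
  | ol_empty : ordered_lang (fun _ => False)
  | ol_union (L1 L2 : language S) :
      ordered_lang L1 -> ordered_lang L2 -> ordered_lang (fun x => L1 x \/ L2 x)
  | ol_cat (L1 L2 : language S) :
      ordered_lang L1 -> ordered_lang L2 ->
      ordered_lang (fun x => exists u v, [/\ L1 u, L2 v & x = u ++ v]).

Definition is_ordered_language (S : finType) (L : language S) : Prop :=
  exists2 L' : language S, ordered_lang L' & forall x, L x <-> L' x.

Definition upward_closed (T : Type) (le : T -> T -> Prop) (I : T -> Prop) : Prop :=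
  forall u w, I u -> le u w -> I w.

(* Main.v *)
Require Import Defs.
From mathcomp Require Import all_boot all_order.
From mathcomp Require Import zify.
From Stdlib Require Import Classical ClassicalEpsilon.
Set Implicit Arguments. Unset Strict Implicit. Unset Printing Implicit Defensive.

Section WL.
Variable E : eqType.
Variable sigma : E -> E.

Lemma onth_rcons_lt (s : seq E) a i : i < size s -> onth (rcons s a) i = onth s i.
Proof. by move=> h; rewrite -cats1 onth_cat h. Qed.
Lemma onth_rcons_size (s : seq E) a : onth (rcons s a) (size s) = Some a.
Proof. by rewrite -cats1 onth_cat ltnn subnn. Qed.

Lemma wl_nil : word_le sigma [::] [::].
Proof. by exists id; split=> // i. Qed.

Lemma wl_match pu pw a : word_le sigma pu pw ->
  word_le sigma (rcons pu a) (rcons pw a).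
Proof.
case=> th [H1 H2 H3].
exists (fun i => if i == size pu then size pw else th i); split.
- move=> i j ij; rewrite size_rcons ltnS => jle.
  have iN : i != size pu by apply/eqP=> e; subst; lia.
  rewrite (negbTE iN).
  case: (j =P size pu) => [jE|/eqP jN].
    have ilt : i < size pu by lia.
    by case: (H2 i ilt).
  by apply: H1 => //; lia.
- move=> i; rewrite !size_rcons ltnS leq_eqVlt => /orP[/eqP ->|il].
    by rewrite eqxx onth_rcons_size onth_rcons_size.
  have iN : i != size pu by apply/eqP=> e; subst; lia.
  rewrite (negbTE iN); have [h1 h2] := H2 i il.
  by split; [lia| rewrite !onth_rcons_lt].
- move=> j; rewrite size_rcons ltnS leq_eqVlt => /orP[/eqP ->|jl].
    exists (size pu); first by rewrite size_rcons.
    by rewrite eqxx; split=> //; left.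
  have [i il [hle hor]] := H3 j jl.
  exists i; first by rewrite size_rcons; lia.
  have iN : i != size pu by apply/eqP=> e; subst; lia.
  rewrite (negbTE iN); split=> //.
  by rewrite !onth_rcons_lt //; lia.
Qed.

Lemma wl_skip pu pw a x : word_le sigma pu pw -> x \in pu -> (x = a \/ x = sigma a) ->
  word_le sigma pu (rcons pw a).
Proof.
case=> th [H1 H2 H3] xin hx.
exists th; split=> //.
- move=> i il; have [h1 h2] := H2 i il.
  by rewrite size_rcons onth_rcons_lt //; split=> //; lia.
- move=> j; rewrite size_rcons ltnS leq_eqVlt => /orP[/eqP ->|jl].
    have [i hi] := onthP xin.
    have il : i < size pu by rewrite -onthTE hi.
    have [h1 h2] := H2 i il.
    exists i => //; split; first by lia.
    rewrite onth_rcons_lt // onth_rcons_size -h2 hi /=.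
    by case: hx => ->; [left|right].
  have [i il [hle hor]] := H3 j jl.
  have [h1 _] := H2 i il.
  exists i => //; split=> //.
  by rewrite !onth_rcons_lt //.
Qed.
End WL.


Section Rel.
Variable E : finType.
Variable sigma : E -> E.

Definition okC (C : {set E}) (a : E) := (a \in C) || (sigma a \in C).

Inductive Rel : {set E} -> seq E -> seq E -> Prop :=
| R_nil C : Rel C [::] [::]
| R_skip C u a w : okC C a -> Rel C u w -> Rel C u (a :: w)
| R_match C u a w : Rel (a |: C) u w -> Rel C (a :: u) (a :: w).

Lemma Rel_mono C u w : Rel C u w -> forall C' : {set E}, C \subset C' -> Rel C' u w.
Proof.
elim=> {C u w} [C|C u a w ok _ IH|C u a w _ IH] C' sub.
- exact: R_nil.
- apply: R_skip; last exact: IH.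
  by move: ok; rewrite /okC => /orP[h|h]; apply/orP; [left|right]; apply: (subsetP sub).
- apply: R_match; apply: IH; exact: setUS.
Qed.

Lemma Rel_word_le C u w : Rel C u w -> forall pu pw, word_le sigma pu pw ->
  (forall x, x \in C -> x \in pu) -> word_le sigma (pu ++ u) (pw ++ w).
Proof.
elim=> {C u w} [C|C u a w ok _ IH|C u a w _ IH] pu pw hw hC.
- by rewrite !cats0.
- rewrite -cat_rcons; apply: IH => //.
  move: ok; rewrite /okC => /orP[h|h].
    by apply: (wl_skip (x:=a)) => //; [apply: hC|left].
  by apply: (wl_skip (x:=sigma a)) => //; [apply: hC|right].
- rewrite -!cat_rcons; apply: IH; first exact: wl_match.
  move=> x; rewrite in_setU1 mem_rcons in_cons => /orP[->//|/hC ->].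
  by rewrite orbT.
Qed.

Lemma Rel_nil_aux C u w : Rel C u w -> u = [::] -> all (okC C) w.
Proof.
elim=> [//|C0 u0 a w0 ok _ IH eu /=|//].
by rewrite ok IH.
Qed.

Lemma Rel_nilP C w : Rel C [::] w <-> all (okC C) w.
Proof.
split; first by move/Rel_nil_aux; apply.
elim: w => [|a w IH] /=; first by move=> _; exact: R_nil.
by case/andP=> ok /IH h; exact: R_skip.
Qed.

Lemma Rel_cons_aux C v w : Rel C v w -> forall a u, v = a :: u ->
  exists x y, [/\ all (okC C) x, Rel (a |: C) u y & w = x ++ a :: y].
Proof.
elim=> [//|C0 v0 b w0 ok _ IH|C0 v0 b w0 h _] a u ev.
  have [x [y [h1 h2 ->]]] := IH a u ev.
  by exists (b :: x), y; split=> //=; rewrite ok h1.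
case: ev => <- <-; by exists [::], w0.
Qed.

Lemma Rel_consP C a u w : Rel C (a :: u) w <->
  exists x y, [/\ all (okC C) x, Rel (a |: C) u y & w = x ++ a :: y].
Proof.
split; first by move/Rel_cons_aux; apply.
case=> x [y [hx hy ->]].
elim: x hx => [|b x IH] /=; first by move=> _; exact: R_match.
by case/andP=> ok /IH h; exact: R_skip.
Qed.

Lemma Rel_ordered u : forall C, exists2 L : language E, ordered_lang L &
   forall w, Rel C u w <-> L w.
Proof.
elim: u => [|a u IH] C.
  exists (fun x => all (fun a => a \in [set b | okC C b]) x); first exact: ol_star.
  move=> w; rewrite Rel_nilP.
  have -> : all (okC C) w = all (fun a => a \in [set b | okC C b]) w.
    by apply: eq_all => b; rewrite inE.
  by [].
have [L hL hLe] := IH (a |: C).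
eexists; first apply: ol_cat; [exact: (ol_star [set b | okC C b])|
   apply: ol_cat; [exact: (ol_single [:: a])|exact: hL]|].
move=> w; rewrite Rel_consP; split.
- case=> x [y [hx hy ->]]; exists x, (a :: y); split=> //.
    by apply/allP=> b /(allP hx); rewrite inE.
  by exists [:: a], y; split=> //; apply/hLe.
- case=> x [v [hx [x2 [y [-> hy ->]]] ->]]; exists x, y; split=> //.
    by apply/allP=> b /(allP hx); rewrite inE.
  by apply/hLe.
Qed.
End Rel.


Definition wqo (T : Type) (R : T -> T -> Prop) :=
  forall f : nat -> T, exists i j, i < j /\ R (f i) (f j).

Lemma inc_mono (phi : nat -> nat) : (forall k, phi k < phi k.+1) ->
  forall k l, k < l -> phi k < phi l.
Proof.
move=> h k l; elim: l => // l IH; rewrite ltnS leq_eqVlt => /orP[/eqP ->|/IH];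
  first exact: h.
by move=> h1; apply: ltn_trans h1 (h l).
Qed.

Lemma inc_mono_le (phi : nat -> nat) : (forall k, phi k < phi k.+1) ->
  forall k l, k <= l -> phi k <= phi l.
Proof.
move=> h k l; rewrite leq_eqVlt => /orP[/eqP ->//|kl].
by apply: ltnW; apply: inc_mono.
Qed.

Lemma inf_subseq (P : nat -> Prop) : (forall N, exists n, N <= n /\ P n) ->
  exists phi : nat -> nat, (forall k, phi k < phi k.+1) /\ forall k, P (phi k).
Proof.
move=> H.
pose c N := proj1_sig (constructive_indefinite_description _ (H N)).
have hc N : N <= c N /\ P (c N) := proj2_sig (constructive_indefinite_description _ (H N)).
pose phi := fix phi k := if k is k'.+1 then c (phi k').+1 else c 0.
exists phi; split.
- by move=> k /=; have [h _] := hc (phi k).+1.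
- by case=> [|k] /=; [case: (hc 0)|case: (hc (phi k).+1)].
Qed.

Lemma wqo_inf T (R : T -> T -> Prop) (f : nat -> T) (P : nat -> Prop) :
  wqo R -> (forall N, exists n, N <= n /\ P n) ->
  exists i j, [/\ i < j, P i, P j & R (f i) (f j)].
Proof.
move=> W /inf_subseq [phi [h1 h2]].
have [k [l [kl r]]] := W (fun k => f (phi k)).
by exists (phi k), (phi l); split=> //; apply: inc_mono.
Qed.

Lemma pigeon (T : finType) (f : nat -> T) :
  exists a, forall N, exists n, N <= n /\ f n = a.
Proof.
apply: NNPP => H.
have H' : forall a, exists N, forall n, N <= n -> f n <> a.
  move=> a; apply: NNPP => Ha; apply: H; exists a => N; apply: NNPP => HN.
  apply: Ha; exists N => n Nn fa; apply: HN; by exists n.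
have : forall s : seq T, exists N, forall n, N <= n -> f n \notin s.
  elim=> [|a s [N hN]]; first by exists 0.
  have [M hM] := H' a.
  exists (maxn N M) => n; rewrite geq_max => /andP[h1 h2].
  by rewrite in_cons negb_or hN // andbT; apply/eqP/hM.
move/(_ (enum T)) => [N /(_ N (leqnn N))].
by rewrite mem_enum.
Qed.

Lemma eventually_or (P : nat -> Prop) :
  (forall N, exists n, N <= n /\ P n) \/ (exists N, forall n, N <= n -> ~ P n).
Proof.
case: (classic (forall N, exists n, N <= n /\ P n)) => [h|h]; [by left|right].
apply: NNPP => h2; apply: h => N; apply: NNPP => h3; apply: h2.
exists N => n Nn Pn; apply: h3; by exists n.
Qed.

Lemma wqo_prod T1 T2 (R1 : T1 -> T1 -> Prop) (R2 : T2 -> T2 -> Prop) :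
  wqo R1 -> (forall x y z, R1 x y -> R1 y z -> R1 x z) -> wqo R2 ->
  forall (g : nat -> T1) (h : nat -> T2), exists i j, [/\ i < j, R1 (g i) (g j) & R2 (h i) (h j)].
Proof.
move=> W1 tr W2 g h.
pose Tm i := ~ exists j, i < j /\ R1 (g i) (g j).
case: (eventually_or Tm) => [inf|[N hN]].
  have [i [j [ij Ti _ r]]] := wqo_inf g W1 inf.
  by case: Ti; exists j.
have H n : exists j, N <= n -> n < j /\ R1 (g n) (g j).
  case: (leqP N n) => Nn; last by exists 0.
  have := hN n Nn; rewrite /Tm => /NNPP [j hj]; by exists j.
pose nx n := proj1_sig (constructive_indefinite_description _ (H n)).
have hnx n : N <= n -> n < nx n /\ R1 (g n) (g (nx n)) :=
  proj2_sig (constructive_indefinite_description _ (H n)).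
pose psi := fix psi k := if k is k'.+1 then nx (psi k') else N.
have psiN k : N <= psi k.
  elim: k => //= k IH; have [h1 _] := hnx _ IH; lia.
have inc k : psi k < psi k.+1 by have [] := hnx _ (psiN k).
have chain k l : k < l -> R1 (g (psi k)) (g (psi l)).
  elim: l => // l IH; rewrite ltnS leq_eqVlt => /orP[/eqP ->|/IH r].
    by have [] := hnx _ (psiN l).
  apply: tr r _; by have [] := hnx _ (psiN l).
have [k [l [kl r]]] := W2 (fun k => h (psi k)).
by exists (psi k), (psi l); split=> //; [apply: inc_mono|apply: chain].
Qed.


Lemma min_nat (P : nat -> Prop) n : P n -> exists m, P m /\ forall k, P k -> m <= k.
Proof.
move=> Pn; apply: NNPP => H.
suff : forall n k, k <= n -> ~ P k by move/(_ n n (leqnn n)).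
elim=> [|n0 IH] k.
  rewrite leqn0 => /eqP -> P0; apply: H; exists 0; split=> // k _.
move=> kn Pk; rewrite leq_eqVlt in kn; case/orP: kn => [/eqP ek|]; last first.
  by rewrite ltnS => /IH; apply.
apply: H; exists k; split=> // j Pj; case: (leqP k j) => // jk.
by case: (IH j); [lia|].
Qed.

Section Higman.
Variable E : finType.

Definition bad (f : nat -> seq E) := forall i j, i < j -> ~~ subseq (f i) (f j).
Definition ext (l : seq (seq E)) :=
  exists f, bad f /\ forall i, i < size l -> f i = nth [::] l i.

Lemma ext_next l : ext l -> exists w, ext (rcons l w) /\
  forall w', ext (rcons l w') -> size w <= size w'.
Proof.
case=> f [bf hf].
have e1 : ext (rcons l (f (size l))).
  exists f; split=> // i; rewrite size_rcons ltnS nth_rcons leq_eqVlt.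
  case/orP=> [/eqP ->|il]; first by rewrite ltnn eqxx.
  by rewrite il hf.
have [k [[w [sw ew]] hk]] := @min_nat (fun k => exists w, size w = k /\ ext (rcons l w)) _
   (ex_intro _ _ (conj (erefl _) e1)).
exists w; split=> // w' ew'; rewrite sw; apply: hk; by exists w'.
Qed.

Definition next (l : seq (seq E)) : seq E :=
  match excluded_middle_informative (ext l) with
  | left H => proj1_sig (constructive_indefinite_description _ (ext_next H))
  | right _ => [::] end.

Lemma next_spec l : ext l -> ext (rcons l (next l)) /\
  forall w', ext (rcons l w') -> size (next l) <= size w'.
Proof.
rewrite /next; case: excluded_middle_informative => // H _.
exact: (proj2_sig (constructive_indefinite_description _ (ext_next H))).
Qed.

Fixpoint pre n := if n is n'.+1 then rcons (pre n') (next (pre n')) else [::].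

Lemma size_pre n : size (pre n) = n.
Proof. by elim: n => //= n IH; rewrite size_rcons IH. Qed.

Lemma higman : wqo (fun u w : seq E => subseq u w).
Proof.
move=> f; apply: NNPP => nf.
have bf : bad f.
  move=> i j ij; apply/negP => s; apply: nf; by exists i, j.
have ext_pre n : ext (pre n).
  elim: n => [|n IH] /=; last by case: (next_spec IH).
  by exists f.
pose m i := next (pre i).
have nth_pre n i : i < n -> nth [::] (pre n) i = m i.
  elim: n => // n IH; rewrite ltnS leq_eqVlt => /orP[/eqP ->|il] /=;
    rewrite nth_rcons size_pre; first by rewrite ltnn eqxx.
  by rewrite il IH.
have bm : bad m.
  move=> i j ij; have [g [bg hg]] := ext_pre j.+1.
  rewrite -(nth_pre j.+1 i) ?ltnS; last by lia.
  rewrite -(nth_pre j.+1 j) // -!hg ?size_pre; [exact: bg|by []|lia].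
have mne n : m n != [::].
  apply/eqP=> e; have := bm n n.+1 (ltnSn n); by rewrite e sub0seq.
have [x0 _] : exists x0 : E, true.
  by move: (mne 0); case: (m 0) => [//|x0 _ _]; exists x0.
have [a inf] := pigeon (fun n => head x0 (m n)).
have [phi [inc hphi]] := inf_subseq inf.
have mE k : m (phi k) = a :: behead (m (phi k)).
  by move: (mne (phi k)) (hphi k) => /=; case: (m (phi k)) => //= b s _ ->.
pose h i := if i < phi 0 then m i else behead (m (phi (i - phi 0))).
have bh : bad h.
  move=> i j ij; rewrite /h.
  case: (ltnP j (phi 0)) => j0.
    by rewrite (ltn_trans ij j0); apply: bm.
  case: (ltnP i (phi 0)) => i0.
    have hlt : i < phi (j - phi 0) by apply: (leq_trans i0); apply: (inc_mono_le inc).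
    apply/negP => s; move/negP: (bm _ _ hlt); apply.
    rewrite mE; apply: subseq_trans s _; exact: subseq_cons.
  have hlt : phi (i - phi 0) < phi (j - phi 0) by apply: (inc_mono inc); lia.
  apply/negP => s; move/negP: (bm _ _ hlt); apply.
  by rewrite (mE (i - phi 0)) (mE (j - phi 0)) /= eqxx.
have e : ext (rcons (pre (phi 0)) (h (phi 0))).
  exists h; split=> // i; rewrite size_rcons size_pre ltnS nth_rcons size_pre leq_eqVlt.
  case/orP=> [/eqP ->|il]; first by rewrite ltnn eqxx.
  by rewrite il nth_pre // /h il.
have [_ /(_ _ e)] := next_spec (ext_pre (phi 0)).
rewrite /h ltnn subnn -/(m (phi 0)) (mE 0) /=; lia.
Qed.
End Higman.


Section W.
Variable E : finType.
Variable sigma : E -> E.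

Lemma Rel_pref C B B' x y : subseq B B' -> all (okC sigma C) B' ->
  Rel sigma C x y -> Rel sigma C (B ++ x) (B' ++ y).
Proof.
elim: B' B x y C => [|c B' IH] B x y C.
  by rewrite subseq0 => /eqP -> _.
move=> s /= /andP[okc okB] r.
case: B s => [_|b B] /=.
  by apply: R_skip => //; apply: (IH [::]) => //; exact: sub0seq.
case: eqP => [<- s|_ s].
  apply: R_match; apply: (Rel_mono (IH _ _ _ _ s okB r)).
  by apply/subsetP=> z zC; rewrite in_setU1 zC orbT.
apply: R_skip => //; exact: (IH (b :: B)).
Qed.

Lemma split_first C w : ~~ all (okC sigma C) w ->
  exists p : seq E * E * seq E,
   [/\ w = p.1.1 ++ p.1.2 :: p.2, all (okC sigma C) p.1.1 & ~~ okC sigma C p.1.2].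
Proof.
elim: w => [//|c w IH] /=; rewrite negb_and.
case okc : (okC sigma C c) => /= h.
  have [[[B a] r] [e1 e2 e3]] := IH h.
  by exists (c :: B, a, r); rewrite /= e1 okc e2.
by exists ([::], c, w); rewrite okc.
Qed.

Lemma wqoRel n : forall C, #|~: C| < n -> wqo (Rel sigma C).
Proof.
elim: n => // n IH C hC f.
case: (eventually_or (fun n => all (okC sigma C) (f n))) => [inf|[N hN]].
  have [i [j [ij Pi Pj s]]] := wqo_inf f (@higman E) inf.
  exists i, j; split=> //.
  rewrite -(cats0 (f i)) -(cats0 (f j)); apply: Rel_pref => //; exact: R_nil.
pose f' k := f (k + N).
have H k : exists p : seq E * E * seq E,
   [/\ f' k = p.1.1 ++ p.1.2 :: p.2, all (okC sigma C) p.1.1 & ~~ okC sigma C p.1.2].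
  apply: split_first; apply/negP; apply: hN; exact: leq_addl.
pose dec k := proj1_sig (constructive_indefinite_description _ (H k)).
have hdec k : [/\ f' k = (dec k).1.1 ++ (dec k).1.2 :: (dec k).2,
    all (okC sigma C) (dec k).1.1 & ~~ okC sigma C (dec k).1.2] :=
  proj2_sig (constructive_indefinite_description _ (H k)).
have [a inf] := pigeon (fun k => (dec k).1.2).
have [phi [inc hphi]] := inf_subseq inf.
have aC : a \notin C.
  by have [_ _] := hdec (phi 0); rewrite hphi /okC negb_or => /andP[].
have hC' : #|~: (a |: C)| < n.
  have h1 := cardsC C; have h2 := cardsC (a |: C); have h3 := cardsU1 a C.
  rewrite aC in h3; lia.
have [k [l [kl s r]]] := wqo_prod (@higman E) (fun x y z => @subseq_trans E y x z)
   (IH _ hC') (fun k => (dec (phi k)).1.1) (fun k => (dec (phi k)).2).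
exists (phi k + N), (phi l + N); split; first by have := inc_mono inc kl; lia.
have [e1 _ _] := hdec (phi k); have [e2 ok2 _] := hdec (phi l).
rewrite -/(f' (phi k)) -/(f' (phi l)) e1 e2 !hphi.
by apply: Rel_pref => //; apply: R_match.
Qed.
End W.

Lemma FB (T : eqType) (x0 : T) (R : T -> T -> Prop) (I : T -> Prop) : wqo R ->
  exists B : seq T, (forall b, b \in B -> I b) /\
     forall w, I w -> exists b, b \in B /\ R b w.
Proof.
move=> W; apply: NNPP => H.
have step (B : seq T) : (forall b, b \in B -> I b) -> exists w, I w /\ forall b, b \in B -> ~ R b w.
  move=> hB; apply: NNPP => h2; apply: H; exists B; split=> // w Iw.
  apply: NNPP => h3; apply: h2; exists w; split=> // b bB Rbw; apply: h3; by exists b.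
pose nxt (B : seq T) := match excluded_middle_informative
   (exists w, I w /\ forall b, b \in B -> ~ R b w) with
  | left h => proj1_sig (constructive_indefinite_description _ h) | right _ => x0 end.
have nxt_spec (B : seq T) : (forall b, b \in B -> I b) ->
    I (nxt B) /\ forall b, b \in B -> ~ R b (nxt B).
  move=> hB; rewrite /nxt; case: excluded_middle_informative => [h|h].
    exact: (proj2_sig (constructive_indefinite_description _ h)).
  by case: h; apply: step.
pose P := fix P n := if n is n'.+1 then rcons (P n') (nxt (P n')) else [::].
have PI n : forall b, b \in P n -> I b.
  elim: n => //= n IHn b; rewrite mem_rcons in_cons => /orP[/eqP ->|/IHn //].
  by case: (nxt_spec _ IHn).
have Pin i j : i < j -> nxt (P i) \in P j.
  elim: j => // j IHj; rewrite ltnS leq_eqVlt /= mem_rcons in_cons.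
  by case/orP=> [/eqP ->|/IHj ->]; rewrite ?eqxx ?orbT.
have [i [j [ij r]]] := W (fun n => nxt (P n)).
by have [_ /(_ _ (Pin _ _ ij))] := nxt_spec _ (PI j).
Qed.

Theorem mainTheorem8 (d : Order.disp_t) (E : finOrderType d) (sigma : E -> E)
  (Hsigma : OSB_involution sigma) (I : language E) :
  upward_closed (word_le sigma) I -> is_ordered_language I.
Proof.
move=> up.
have W : wqo (Rel sigma set0) := @wqoRel E sigma _ set0 (ltnSn _).
have [B [BI BR]] := FB [::] I W.
have [L hL hLe] : exists2 L : language E, ordered_lang L &
    forall w, (exists b, b \in B /\ Rel sigma set0 b w) <-> L w.
  elim: B {BI BR} => [|b B [L hL hLe]].
    exists (fun _ => False); first exact: ol_empty.
    by move=> w; split=> // [[b []]].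
  have [L1 hL1 hL1e] := Rel_ordered sigma b set0.
  exists (fun x => L1 x \/ L x); first exact: ol_union.
  move=> w; split.
    case=> c []; rewrite in_cons => /orP[/eqP ->|cB] r; first by left; apply/hL1e.
    by right; apply/hLe; exists c.
  case=> [/hL1e r|/hLe [c [cB r]]]; first by exists b; rewrite mem_head.
  by exists c; rewrite in_cons cB orbT.
exists L => // w; rewrite -hLe; split; first exact: BR.
case=> b [bB r]; apply: (up b); first exact: BI.
have := Rel_word_le r (wl_nil sigma); rewrite /=; apply.
by move=> x; rewrite in_set0.
Qed.
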